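(* Let $V$ be a Majorana representation with identity $\mathbb 1$ satisfying axiom M2'. Then the Majorana axes of $V$ (the elements of $\psi(T)$) are indecomposable idempotents.
   Context: A transposition group $(G,T)$ is a finite group $G$ with a $G$-stable set $T$ of involutions generating $G$. A Majorana representation of $(G,T)$ is a quintuple $(G,T,V,\varphi,\psi)$ where $V$ is a commutative non-associative real algebra with a (positive definite) inner product $(\,,)$, $\varphi:G\to GL(V)$ is a representation with $\varphi(G)\le \mathrm{Aut}(V)$, and $\psi:T\to V\setminus\{0\}$ is injective with $\psi(t^g)=\psi(t)^{\varphi(g)}$, such that: (M1) $(u,v\cdot w)=(u\cdot v,w)$ for all $u,v,w$; (M2) $(u\cdot u,v\cdot v)\ge (u\cdot v,u\cdot v)$ for all $u,v$; (M3) elements of $\psi(T)$ (Majorana axes) are idempotents of length $1$; (M4) each Majorana axis $a$ has $\mathrm{ad}_a:u\mapsto a\cdot u$ diagonalizable with eigenvalues in $\{0,1,\frac1{4},\frac1{32}\}$; (M5) $1$ is a simple eigenvalue of each Majorana axis; (M6) for each axis $a$ the linear map $\tau(a)$ acting as $(-1)^{32\mu}$ on the $\mu$-eigenspace of $\mathrm{ad}_a$ is an algebra automorphism; (M7) for each axis $a$ the map $\sigma(a)$ on $C_V(\tau(a))$ acting as $(-1)^{4\mu}$ on the $\mu$-eigenspaces, $\mu\ne\frac1{32}$, preserves the product of $C_V(\tau(a))$; (M8) $\tau(\psi(t))=\varphi(t)$ for all $t\in T$. Axiom M2': the Norton inequality holds for all $u,v$, with equality precisely when $\mathrm{ad}_u$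 and $\mathrm{ad}_v$ commute. An idempotent is decomposable if it can be written as a sum of at least two non-zero idempotents, and indecomposable otherwise. *)

(* Defs.v *)
From HB Require Import structures.
From mathcomp Require Import all_boot all_order all_algebra all_fingroup.
From mathcomp Require Import reals.
Set Implicit Arguments. Unset Strict Implicit. Unset Printing Implicit Defensive.
Import Order.TTheory GRing.Theory Num.Theory.
Local Open Scope ring_scope.

Section MajoranaDefs.
Variables (R : realType) (V : lmodType R).

Definition is_comm_bilinear (mul : V -> V -> V) : Prop :=
  (forall u v, mul u v = mul v u) /\
  (forall (k : R) u v w, mul (k *: u + v) w = k *: mul u w + mul v w).

Definition is_inner_product (form : V -> V -> R) : Prop :=
  (forall u v, form u v = form v u) /\
  (forall (k : R) u v w, form (k *: u + v) w = k * form u w + form v w) /\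
  (forall v, v != 0 -> 0 < form v v).

Definition is_linear_map (f : V -> V) : Prop :=
  forall (k : R) u v, f (k *: u + v) = k *: f u + f v.

Definition is_alg_aut (mul : V -> V -> V) (f : V -> V) : Prop :=
  [/\ is_linear_map f, bijective f & forall u v, f (mul u v) = mul (f u) (f v)].

Definition eigv (mul : V -> V -> V) (a : V) (mu : R) (v : V) : Prop :=
  mul a v = mu *: v.

Definition idempotent (mul : V -> V -> V) (a : V) : Prop := mul a a = a.

(* tau(a): acts as (-1)^(32 mu) on the mu-eigenspace of ad_a *)
Definition is_tau (mul : V -> V -> V) (a : V) (f : V -> V) : Prop :=
  [/\ is_linear_map f,
      (forall v, eigv mul a 0 v \/ eigv mul a 1 v \/ eigv mul a (1/4) v -> f v = v)
    & (forall v, eigv mul a (1/32) v -> f v = - v)].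

(* sigma(a) on C_V(tau(a)): acts as (-1)^(4 mu) on the mu-eigenspaces, mu <> 1/32
   (its values outside C_V(tau(a)) are irrelevant) *)
Definition is_sigma (mul : V -> V -> V) (a : V) (s : V -> V) : Prop :=
  [/\ is_linear_map s,
      (forall v, eigv mul a 0 v \/ eigv mul a 1 v -> s v = v)
    & (forall v, eigv mul a (1/4) v -> s v = - v)].

Record majorana_axis (mul : V -> V -> V) (form : V -> V -> R) (a : V) : Prop := {
  M3_idem : idempotent mul a;
  M3_length : form a a = 1;
  M4 : forall v, exists v0 v1 v2 v3,
         [/\ v = v0 + v1 + v2 + v3, eigv mul a 0 v0, eigv mul a 1 v1,
             eigv mul a (1/4) v2 & eigv mul a (1/32) v3];
  M5 : forall v, eigv mul a 1 v -> exists k : R, v = k *: a;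
  M6 : forall f, is_tau mul a f -> is_alg_aut mul f;
  M7 : forall f s, is_tau mul a f -> is_sigma mul a s ->
         forall u v, f u = u -> f v = v -> s (mul u v) = mul (s u) (s v)
}.

(* Majorana representation (G, T, V, phi, psi); phi is a right action:
   v^(phi (g h)) = (v^(phi g))^(phi h), matching t^g = g^-1 t g in MathComp. *)
Record majorana_rep (mul : V -> V -> V) (form : V -> V -> R)
    (gT : finGroupType) (G : {group gT}) (T : {set gT})
    (phi : gT -> V -> V) (psi : gT -> V) : Prop := {
  tg_invol : forall t, t \in T -> #[t]%g = 2%N;
  tg_stable : forall t g, t \in T -> g \in G -> (t ^ g)%g \in T;
  tg_gen : <<T>>%g = G :> {set gT};
  alg_prod : is_comm_bilinear mul;
  inner : is_inner_product form;
  M1 : forall u v w, form u (mul v w) = form (mul u v) w;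
  M2 : forall u v, form (mul u v) (mul u v) <= form (mul u u) (mul v v);
  rep_one : forall v, phi 1%g v = v;
  rep_mul : forall g h, g \in G -> h \in G -> forall v, phi (g * h)%g v = phi h (phi g v);
  rep_aut : forall g, g \in G -> is_alg_aut mul (phi g);
  psi_inj : {in T &, injective psi};
  psi_nz : forall t, t \in T -> psi t != 0;
  psi_equiv : forall t g, t \in T -> g \in G -> psi (t ^ g)%g = phi g (psi t);
  axes : forall t, t \in T -> majorana_axis mul form (psi t);
  M8 : forall t, t \in T -> is_tau mul (psi t) (phi t)
}.

Definition axiom_M2' (mul : V -> V -> V) (form : V -> V -> R) : Prop :=
  forall u v,
    form (mul u v) (mul u v) <= form (mul u u) (mul v v) /\
    (form (mul u u) (mul v v) = form (mul u v) (mul u v) <->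
       forall w, mul u (mul v w) = mul v (mul u w)).

Definition decomposable (mul : V -> V -> V) (a : V) : Prop :=
  exists s : seq V,
    [/\ (2 <= size s)%N,
        (forall x, x \in s -> x != 0 /\ idempotent mul x)
      & a = \sum_(x <- s) x].

Definition indecomposable_idempotent (mul : V -> V -> V) (a : V) : Prop :=
  idempotent mul a /\ ~ decomposable mul a.

End MajoranaDefs.

(* Main.v *)
Require Import Defs.
From HB Require Import structures.
From mathcomp Require Import all_boot all_order all_algebra all_fingroup.
From mathcomp Require Import reals.
Import Order.TTheory GRing.Theory Num.Theory.
Local Open Scope ring_scope.

Set Implicit Arguments. Unset Strict Implicit.
Section Helpers.
Variables (R : realType) (V : lmodType R) (mul : V -> V -> V) (form : V -> V -> R).
Hypothesis Hmul : is_comm_bilinear mul.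
Hypothesis Hform : is_inner_product form.

Lemma mul0l w : mul 0 w = 0.
Proof.
case: Hmul => _ H; have := H 1 0 0 w; rewrite !scale1r addr0.
by move/(congr1 (fun z => z - mul 0 w)); rewrite subrr addrK => /esym.
Qed.

Lemma mulDl u v w : mul (u + v) w = mul u w + mul v w.
Proof. by case: Hmul => _ H; have := H 1 u v w; rewrite !scale1r. Qed.

Lemma mulZl k u w : mul (k *: u) w = k *: mul u w.
Proof. by case: Hmul => _ H; have := H k u 0 w; rewrite !addr0 mul0l addr0. Qed.

Lemma mul_suml I (r : seq I) (P : pred I) (F : I -> V) w :
  mul (\sum_(i <- r | P i) F i) w = \sum_(i <- r | P i) mul (F i) w.
Proof.
exact: (big_morph (fun x => mul x w) (fun x y => mulDl x y w) (mul0l w)).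
Qed.

Lemma form0l w : form 0 w = 0.
Proof.
case: Hform => _ [H _]; have := H 1 0 0 w; rewrite scale1r addr0 !mul1r.
by move/(congr1 (fun z => z - form 0 w)); rewrite subrr addrK => /esym.
Qed.

Lemma formDl u v w : form (u + v) w = form u w + form v w.
Proof. by case: Hform => _ [H _]; have := H 1 u v w; rewrite !scale1r mul1r. Qed.

Lemma form_suml I (r : seq I) (P : pred I) (F : I -> V) w :
  form (\sum_(i <- r | P i) F i) w = \sum_(i <- r | P i) form (F i) w.
Proof.
exact: (big_morph (fun x => form x w) (fun x y => formDl x y w) (form0l w)).
Qed.

Lemma form_sumr I (r : seq I) (P : pred I) (F : I -> V) w :
  form w (\sum_(i <- r | P i) F i) = \sum_(i <- r | P i) form w (F i).
Proof.
case: Hform => Hs _; rewrite Hs form_suml; apply: eq_bigr => i _; exact: Hs.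
Qed.

Lemma form_ge0 v : 0 <= form v v.
Proof.
case: Hform => _ [_ H]; have [->|/H/ltW //] := eqVneq v 0; by rewrite form0l.
Qed.

Lemma form_eq0 v : form v v <= 0 -> v = 0.
Proof.
case: Hform => _ [_ H] Hle; case: (eqVneq v 0) => // /H; by rewrite ltNge Hle.
Qed.
End Helpers.

Theorem mainTheorem6 (R : realType) (V : lmodType R)
    (mul : V -> V -> V) (form : V -> V -> R)
    (gT : finGroupType) (G : {group gT}) (T : {set gT})
    (phi : gT -> V -> V) (psi : gT -> V)
    (HV : majorana_rep mul form G T phi psi)
    (one : V) (Hone : forall v, mul one v = v)
    (HM2' : axiom_M2' mul form) :
  forall t, t \in T -> indecomposable_idempotent mul (psi t).
Proof.
move=> t tT.
have Hax := axes HV tT.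
have Hmul := alg_prod HV; have Hform := inner HV.
have HM1 := M1 HV; have HM2 := M2 HV.
have [Hmc _] := Hmul; have [Hfs _] := Hform.
set a := psi t.
split; first exact: M3_idem Hax.
case=> s [Hsz Hs Ha].
set n := size s.
pose f (i : 'I_n) := nth 0 s i.
have fs i : f i \in s by apply: mem_nth.
have fid i : mul (f i) (f i) = f i by have [_ ->] := Hs _ (fs i).
have fnz i : f i != 0 by have [-> _] := Hs _ (fs i).
have Ha' : a = \sum_(i < n) f i by rewrite Ha (big_nth 0) big_mkord.
have Hone_id x : mul x x = x -> form one x = form x x.
  by move=> Hx; rewrite -{1}Hx HM1 Hone.
have Haa : form a a = 1 := M3_length Hax.
have Hoff i j : 0 <= form (f i) (f j).
  apply: le_trans (form_ge0 Hform (mul (f i) (f j))) _.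
  by have := HM2 (f i) (f j); rewrite !fid.
pose g i j := form (f i) (f j).
have E1 : \sum_(i < n) \sum_(j < n) g i j = 1.
  rewrite -Haa {2}Ha' form_sumr //; apply: eq_bigr => i _.
  by rewrite Ha' form_suml //; apply: eq_bigr => j _; rewrite /g Hfs.
have E2 : \sum_(i < n) g i i = 1.
  rewrite -Haa -(Hone_id a (M3_idem Hax)) Ha' form_sumr //.
  by apply: eq_bigr => i _; rewrite Hone_id.
have E3 : \sum_(i < n) \sum_(j < n | j != i) g i j = 0.
  have E : \sum_(i < n) (\sum_(j < n) g i j - g i i) = 0 by rewrite sumrB E1 E2 subrr.
  rewrite -[RHS]E; apply: eq_bigr => i _.
  by rewrite [in RHS](bigD1 i) //= addrC addrK.
have n0 : (0 < n)%N by apply: leq_trans Hsz.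
have n1 : (1 < n)%N by [].
pose i0 : 'I_n := Ordinal n0.
pose i1 : 'I_n := Ordinal n1.
have H0 j : j != i0 -> g i0 j = 0.
  move=> Hj.
  have Hz : \sum_(j < n | j != i0) g i0 j = 0.
    apply: (psumr_eq0P _ E3) => // i _; apply: sumr_ge0 => j' _; apply: Hoff.
  by apply: (psumr_eq0P _ Hz) => // k _; apply: Hoff.
have M0 j : j != i0 -> mul (f j) (f i0) = 0.
  move=> Hj; apply: (form_eq0 Hform).
  have := HM2 (f j) (f i0); rewrite !fid [form (f j) _]Hfs.
  by have := H0 j Hj; rewrite /g => ->.
have Hai0 : mul a (f i0) = f i0.
  rewrite Ha' mul_suml // (bigD1 i0) //= fid big1 ?addr0 //.
have [k Hk] : exists k : R, f i0 = k *: a.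
  by apply: (M5 Hax); rewrite /eigv scale1r.
have Hk1 : k = 1.
  have Hid := fid i0; rewrite Hk mulZl // Hmc mulZl // (M3_idem Hax) scalerA in Hid.
  have anz : a != 0 by apply/eqP => Ha0; move: Haa; rewrite Ha0 form0l // => /eqP; rewrite eq_sym oner_eq0.
  have : (k * k - k) *: a = 0 by rewrite scalerBl Hid subrr.
  move/eqP; rewrite scaler_eq0 (negPf anz) orbF -{3}(mulr1 k) -mulrBr mulf_eq0 subr_eq0.
  case/orP => /eqP // k0; move: (fnz i0); by rewrite Hk k0 scale0r eqxx.
have Hfa : f i0 = a by rewrite Hk Hk1 scale1r.
have : \sum_(i < n | i != i0) g i i = 0.
  have Hg0 : g i0 i0 = 1 by rewrite /g Hfa Haa.
  by move: E2; rewrite (bigD1 i0) //= Hg0 => /(congr1 (fun z => z - 1)); rewrite subrr addrC addrK.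
move/psumr_eq0P => Hz.
have : g i1 i1 = 0 by apply: Hz => //; move=> i _; apply: form_ge0.
move=> H1; move: (fnz i1); rewrite (@form_eq0 _ _ _ Hform (f i1)) ?eqxx //.
by rewrite /g in H1; rewrite H1.
Qed.
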